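(* Let $\mathcal H$ be a finite-dimensional Hilbert space and $\rho$ a density matrix on $\mathcal H$. Let $\sigma^{(1)}=\{|\psi_i\rangle\langle\psi_i|\}$ be the set of rank-1 projectors onto an orthonormal eigenbasis $\{|\psi_i\rangle\}$ of $\rho$, and let $\sigma^{(2)}$ be any exhaustive exclusive set of rank-1 projectors. Then $\mathcal S=\{\rho,\sigma^{(1)},\sigma^{(2)}\}$ is medium consistent, and there are no exhaustive exclusive sets of projectors $\tau^{(1)},\dots,\tau^{(n)}$ such that $\mathcal S'=\{\rho,\sigma^{(1)},\tau^{(1)},\dots,\tau^{(n)},\sigma^{(2)}\}$ is a nontrivial consistent extension of $\mathcal S$.
   Context: A set of projectors $\sigma=\{P_\alpha\}_{\alpha=1,\dots,m}$ on $\mathcal H$ is exhaustive and exclusive if $\sum_\alpha P_\alpha=\mathbb 1$ and $P_\alpha P_\beta=\delta_{\alpha\beta}P_\alpha$. A family of histories $\{\rho,\sigma^{(1)},\dots,\sigma^{(n)}\}$ consists of an initial density matrix $\rho$ and exhaustive exclusive sets $\sigma^{(j)}=\{P^{(j)}_{\alpha_j}\}$ (Heisenberg-picture projectors at successive times $t_1<\dots<t_n$). A history is a tuple $\alpha=(\alpha_1,\dots,\alpha_n)$ with history operator $C_\alpha=P^{(1)}_{\alpha_1}\cdots P^{(n)}_{\alpha_n}$, probability $Pr(\alpha)=\mathrm{Tr}\{C_\alpha^\dagger\rho C_\alpha\}$ and coherence function $D(\alpha;\beta)=\mathrm{Tr}\{C_\alpha^\dagger\rho C_\beta\}$. The family is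 (medium) consistent if $D(\alpha;\beta)=\delta_{\alpha\beta}Pr(\alpha)$ for all histories $\alpha,\beta$. Given a consistent family $\mathcal S=\{\rho,\sigma^{(1)},\dots,\sigma^{(n)}\}$, a family obtained by inserting additional exhaustive exclusive sets of projectors at intermediate times (before the last set $\sigma^{(n)}$) is a consistent extension of $\mathcal S$ if it is consistent; the extension is trivial if for every history $(\alpha_1,\dots,\alpha_n)$ of $\mathcal S$ there is at most one history of the extended family with nonzero probability that agrees with it at the original times, and nontrivial otherwise. *)

(* Defs.v *)
From mathcomp Require Import all_boot all_order all_algebra.
From mathcomp Require Import algC.
Set Implicit Arguments. Unset Strict Implicit. Unset Printing Implicit Defensive.
Import Order.TTheory GRing.Theory Num.Theory.
Local Open Scope ring_scope.

(* The Hilbert space is C^(d.+1) (nonzero finite dimension). *)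
Notation mat d := 'M[algC]_d.+1.

Definition adjm (m n : nat) (A : 'M[algC]_(m, n)) : 'M[algC]_(n, m) :=
  (map_mx Num.conj A)^T.

Definition hermitian d (A : mat d) : Prop := adjm A = A.

Definition psd d (A : mat d) : Prop :=
  forall v : 'cV[algC]_d.+1, 0 <= (adjm v *m A *m v) 0 0.

Definition density_matrix d (rho : mat d) : Prop :=
  hermitian rho /\ psd rho /\ \tr rho = 1.

Definition projector d (P : mat d) : Prop := hermitian P /\ P *m P = P.

Definition exh_excl d (s : seq (mat d)) : Prop :=
  (forall a, (a < size s)%N -> projector (nth 0 s a)) /\
  \sum_(a < size s) nth 0 s a = 1 /\
  (forall a b, (a < size s)%N -> (b < size s)%N ->
     nth 0 s a *m nth 0 s b = if a == b then nth 0 s a else 0).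

(* A family of histories {rho, sigma^(1), ..., sigma^(n)} is given by rho and
   the sequence F = [:: sigma^(1); ...; sigma^(n)] of sets of projectors. *)
Definition history d (F : seq (seq (mat d))) (a : seq nat) : Prop :=
  size a = size F /\
  forall j, (j < size F)%N -> (nth 0%N a j < size (nth [::] F j))%N.

Definition hist_op d (F : seq (seq (mat d))) (a : seq nat) : mat d :=
  \prod_(j < size F) nth 0 (nth [::] F j) (nth 0%N a j).

Definition coherence d (rho : mat d) (F : seq (seq (mat d))) (a b : seq nat)
  : algC :=
  \tr (adjm (hist_op F a) *m rho *m hist_op F b).

Definition prob d (rho : mat d) (F : seq (seq (mat d))) (a : seq nat) : algC :=
  \tr (adjm (hist_op F a) *m rho *m hist_op F a).

Definition consistent d (rho : mat d) (F : seq (seq (mat d))) : Prop :=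
  forall a b, history F a -> history F b ->
    coherence rho F a b = if a == b then prob rho F a else 0.

(* Given the extended family F' in which the original sets sit at positions
   [pos] (listed in order), the extension is nontrivial if some history of the
   original family F is the restriction of two distinct histories of F' with
   nonzero probability. *)
Definition nontrivial_ext d (rho : mat d) (F F' : seq (seq (mat d)))
  (pos : seq nat) : Prop :=
  exists a, history F a /\
  exists b1 b2, [/\ history F' b1, history F' b2 & b1 <> b2] /\
    [/\ prob rho F' b1 != 0, prob rho F' b2 != 0,
    [seq nth 0%N b1 i | i <- pos] = a & [seq nth 0%N b2 i | i <- pos] = a].

Definition consistent_nontrivial_ext d (rho : mat d) (F F' : seq (seq (mat d)))
  (pos : seq nat) : Prop :=
  consistent rho F' /\ nontrivial_ext rho F F' pos.

(* Main.v *)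
Require Import Defs.
From mathcomp Require Import all_boot all_order all_algebra.
From mathcomp Require Import algC.
Import GRing.Theory Num.Theory.
Local Open Scope ring_scope.

Lemma adjmM m n p (A : 'M[algC]_(m, n)) (B : 'M[algC]_(n, p)) :
  adjm (A *m B) = adjm B *m adjm A.
Proof. by rewrite /adjm map_mxM trmx_mul. Qed.

Lemma adjmK m n (A : 'M[algC]_(m, n)) : adjm (adjm A) = A.
Proof.
by apply/matrixP => i j; rewrite /adjm !mxE conjCK.
Qed.

Lemma rank1_scal d (psi : 'cV[algC]_d.+1) (Q X1 X2 : 'M[algC]_d.+1) :
  \rank Q = 1%N ->
  psi *m adjm psi *m X1 *m Q != 0 ->
  exists c, psi *m adjm psi *m X2 *m Q = c *: (psi *m adjm psi *m X1 *m Q).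
Proof.
move=> rQ nz.
set r1 := adjm psi *m X1 *m Q.
set r2 := adjm psi *m X2 *m Q.
have e1 : psi *m adjm psi *m X1 *m Q = psi *m r1 by rewrite /r1 !mulmxA.
have e2 : psi *m adjm psi *m X2 *m Q = psi *m r2 by rewrite /r2 !mulmxA.
rewrite e1 e2 in nz *.
have r1nz : r1 != 0 by apply: contraNneq nz => ->; rewrite mulmx0.
have s1 : (r1 <= Q)%MS by rewrite /r1 submxMl.
have s2 : (r2 <= Q)%MS by rewrite /r2 submxMl.
have rk1 : \rank r1 = 1%N.
  by apply/eqP; rewrite eqn_leq rank_leq_row lt0n mxrank_eq0 r1nz.
have sQ : (Q <= r1)%MS.
  by have [_ <-] := mxrank_leqif_sup s1; rewrite rk1 rQ.
have /submxP [D eD] := submx_trans s2 sQ.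
exists (D 0 0); rewrite eD {1}[D]mx11_scalar mul_scalar_mx.
by rewrite -scalemxAr.
Qed.

Lemma adjm_col d (U : 'M[algC]_d.+1) i j :
  adjm U *m U = 1%:M ->
  adjm (col i U) *m col j U = ((i == j)%:R)%:M.
Proof.
move=> hU; apply/matrixP => a b.
rewrite (ord1 a) (ord1 b) !mxE.
have h := congr1 (fun M : 'M[algC]_d.+1 => M i j) hU; move: h => /=.
rewrite !mxE => <-.
by apply: eq_bigr => k _; rewrite !mxE.
Qed.

Lemma hist2 d (s1 s2 : seq (mat d)) x y :
  hist_op [:: s1; s2] [:: x; y] = nth 0 s1 x *m nth 0 s2 y.
Proof. by rewrite /hist_op big_ord_recr big_ord_recr big_ord0 /= mul1r mulmxE. Qed.

Lemma histn d (s1 s2 : seq (mat d)) taus b :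
  exists X, hist_op (s1 :: rcons taus s2) b =
    nth 0 s1 (nth 0%N b 0) *m X *m nth 0 s2 (nth 0%N b (size taus).+1).
Proof.
rewrite /hist_op /= size_rcons big_ord_recl big_ord_recr /=.
eexists; rewrite -!mulmxE mulmxA; congr (_ *m _ *m _).
by rewrite nth_rcons ltnn eqxx.
Qed.

Theorem lemma2 (d : nat) (rho : 'M[algC]_d.+1)
  (U : 'M[algC]_d.+1) (lam : 'I_d.+1 -> algC)
  (sigma2 : seq 'M[algC]_d.+1) :
  density_matrix rho ->
  (* the columns psi_i of U form an orthonormal eigenbasis of rho *)
  adjm U *m U = 1%:M ->
  (forall i : 'I_d.+1, rho *m col i U = lam i *: col i U) ->
  exh_excl sigma2 ->
  (forall a, (a < size sigma2)%N -> \rank (nth 0 sigma2 a) = 1%N) ->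
  let sigma1 := [seq col i U *m adjm (col i U) | i <- enum 'I_d.+1] in
  consistent rho [:: sigma1; sigma2] /\
  forall taus : seq (seq 'M[algC]_d.+1),
    (forall t, t \in taus -> exh_excl t) ->
    ~ consistent_nontrivial_ext rho [:: sigma1; sigma2]
        (sigma1 :: rcons taus sigma2) [:: 0%N; (size taus).+1].
Proof.
move=> _ hU heig [hproj [_ horth]] hrank sigma1.
have ssz : size sigma1 = d.+1 by rewrite size_map size_enum_ord.
have snth : forall i : 'I_d.+1, nth 0 sigma1 i = col i U *m adjm (col i U).
  move=> i; rewrite (nth_map ord0); last by rewrite size_enum_ord.
  by rewrite nth_ord_enum.
split.
  move=> a b [sa ha] [sb hb].
  case: a sa ha => [|i [|k [|]]] //= _ ha.
  case: b sb hb => [|j [|l [|]]] //= _ hb.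
  case: eqP => [-> //| neq].
  have hi := ha 0%N isT; have hk := ha 1%N isT.
  have hj := hb 0%N isT; have hl := hb 1%N isT.
  rewrite /= ssz in hi hj; simpl in hk, hl.
  rewrite /coherence !hist2.
  rewrite -[i]/(nat_of_ord (Ordinal hi)) -[j]/(nat_of_ord (Ordinal hj)) !snth.
  set I := Ordinal hi; set J := Ordinal hj.
  rewrite adjmM !adjmM adjmK (proj1 (hproj _ hk)).
  have -> : nth 0 sigma2 k *m (col I U *m adjm (col I U)) *m rho *m
      (col J U *m adjm (col J U) *m nth 0 sigma2 l) =
      nth 0 sigma2 k *m (col I U *m (adjm (col I U) *m (rho *m col J U)) *m adjm (col J U))
        *m nth 0 sigma2 l by rewrite !mulmxA.
  rewrite heig -scalemxAr adjm_col //.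
  case: (eqVneq I J) => [eIJ | nIJ]; last first.
    have -> : ((false%:R)%:M : 'M[algC]_1) = 0 by apply/matrixP=> x y; rewrite !mxE mul0rn.
    by rewrite scaler0 mulmx0 mul0mx mulmx0 mul0mx mxtrace0.
  have -> : ((true%:R)%:M : 'M[algC]_1) = 1%:M by [].
  rewrite eIJ -scalemxAr mulmx1 -scalemxAl -scalemxAr -scalemxAl mxtraceZ mxtrace_mulC.
  rewrite mulmxA horth //.
  have -> : (l == k) = false.
    apply/negbTE/eqP => elk; apply: neq.
    by have := congr1 val eIJ; rewrite /= elk => ->.
  by rewrite mul0mx mxtrace0 mulr0.
move=> taus _ [cons [a [ha [b1 [b2 [[h1 h2 neq] [p1 p2 m1 m2]]]]]]].
have [e0 en] : nth 0%N b1 0 = nth 0%N b2 0 /\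
    nth 0%N b1 (size taus).+1 = nth 0%N b2 (size taus).+1.
  by move: m1; rewrite -m2 => -[-> ->].
have [X1 eX1] := histn _ sigma1 sigma2 taus b1.
have [X2 eX2] := histn _ sigma1 sigma2 taus b2.
rewrite -e0 -en in eX2.
have hi := (proj2 h1) 0%N isT.
have hk := (proj2 h1) (size taus).+2.-1.
rewrite /= size_rcons ltnSn nth_rcons ltnn eqxx in hk.
have {}hk := hk isT.
rewrite /= ssz in hi.
rewrite -[nth 0%N b1 0]/(nat_of_ord (Ordinal hi)) snth in eX1 eX2.
set C1 := hist_op _ b1 in eX1 p1.
set C2 := hist_op _ b2 in eX2 p2.
have C1nz : C1 != 0.
  by apply: contraNneq p1 => e; rewrite /prob -/C1 e mulmx0 mxtrace0.
rewrite eX1 in C1nz.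
have [c ec] := rank1_scal _ _ _ _ X2 (hrank _ hk) C1nz.
rewrite -eX1 -eX2 in ec.
have := cons b1 b2 h1 h2.
rewrite (negbTE (introN eqP neq)) /coherence -/C1 -/C2 ec -scalemxAr mxtraceZ.
move/eqP; rewrite mulf_eq0 (negbTE p1) orbF => /eqP c0.
by move: p2; rewrite /prob -/C2 ec c0 scale0r mulmx0 mxtrace0 eqxx.
Qed.
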